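(* Let $0<r\le1$, $0<s,w<1$ and $0\le\rho,\delta\le1$. Let $a\in S^m_{\rho,\delta,0,2}(\mathbb{T}\times\mathbb{Z})$. If $m<-\frac1r-w-2\delta$, then $T_a:\Lambda^s(\mathbb{T})\to\Lambda^w(\mathbb{T})$ is an $r$-nuclear operator.
   Context: $\widehat f(\xi)=\int_{\mathbb{T}}e^{-i2\pi x\xi}f(x)dx$, $\langle\xi\rangle=(1+|\xi|^2)^{1/2}$. $S^m_{\rho,\delta,0,2}(\mathbb{T}\times\mathbb{Z})$: functions $a(x,\xi)$ smooth in $x\in\mathbb{T}$ for each $\xi\in\mathbb{Z}$ with $|\partial_x^\beta a(x,\xi)|\le C_\beta\langle\xi\rangle^{m+\delta\beta}$ for $0\le\beta\le2$. $T_au(x)=\sum_{\xi\in\mathbb{Z}}e^{i2\pi x\xi}a(x,\xi)\widehat u(\xi)$. For $0<s<1$, $\Lambda^s(\mathbb{T})$ is the Hölder space with norm $\|f\|_{\Lambda^s}=\sup_{x,h\in\mathbb{T}}|f(x+h)-f(x)||h|^{-s}+\sup_{x\in\mathbb{T}}|f(x)|$ (identified in the paper with the Besov space $B^s_{\infty,\infty}(\mathbb{T})$). $T:E\to F$ is $r$-nuclear if $T=\sum_ne'_n(\cdot)y_n$ with $e'_n\in E'$, $y_n\in F$, $\sum_n\|e'_n\|^r_{E'}\|y_n\|^r_F<\infty$. *)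

(* Defs.v *)
From Stdlib Require Import Reals.
From Coquelicot Require Import Coquelicot.
Open Scope R_scope.

(* Functions on the torus T = R/Z are 1-periodic functions R -> C. *)
Definition periodic1 (f : R -> C) : Prop := forall x, f (x + 1) = f x.

Definition rpow (x p : R) : R := if Rle_dec x 0 then 0 else Rpower x p.

Definition japan (xi : Z) : R := sqrt (1 + (IZR xi) ^ 2).

Definition cexp2pi (t : R) : C := (cos (2 * PI * t), sin (2 * PI * t)).

Definition fourier (f : R -> C) (xi : Z) : C :=
  RInt (V := C_R_CompleteNormedModule)
    (fun x => Cmult (cexp2pi (- x * IZR xi)) (f x)) 0 1.

Definition zsum (g : Z -> C) : C :=
  (Series (fun n => Re (g (Z.of_nat n))) + Series (fun n => Re (g (- Z.of_nat (S n))%Z)),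
   Series (fun n => Im (g (Z.of_nat n))) + Series (fun n => Im (g (- Z.of_nat (S n))%Z))).

(* Hölder space Lambda^s(T), 0<s<1:
   ||f|| = sup_{x,h} |f(x+h)-f(x)| |h|^{-s} + sup_x |f(x)|
   (|h| is the distance of h to 0 in T; taking h over all nonzero reals
   gives the same supremum for 1-periodic f). *)
Definition holder_semi (s : R) (f : R -> C) : Rbar :=
  Lub_Rbar (fun t => exists x h, h <> 0 /\
              t = Cmod (Cminus (f (x + h)) (f x)) / Rpower (Rabs h) s).
Definition sup_norm (f : R -> C) : Rbar :=
  Lub_Rbar (fun t => exists x, t = Cmod (f x)).
Definition in_holder (s : R) (f : R -> C) : Prop :=
  periodic1 f /\ is_finite (holder_semi s f) /\ is_finite (sup_norm f).
Definition holder_norm (s : R) (f : R -> C) : R :=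
  real (holder_semi s f) + real (sup_norm f).

Definition dual_norm (s : R) (e : (R -> C) -> C) : Rbar :=
  Lub_Rbar (fun t => exists u, in_holder s u /\ holder_norm s u <= 1 /\ t = Cmod (e u)).
Definition in_dual (s : R) (e : (R -> C) -> C) : Prop :=
  (forall u v, in_holder s u -> in_holder s v ->
     e (fun x => Cplus (u x) (v x)) = Cplus (e u) (e v)) /\
  (forall (c : C) u, in_holder s u -> e (fun x => Cmult c (u x)) = Cmult c (e u)) /\
  is_finite (dual_norm s e).

Definition r_nuclear (r s w : R) (T : (R -> C) -> (R -> C)) : Prop :=
  (forall u, in_holder s u -> in_holder w (T u)) /\
  exists (e : nat -> ((R -> C) -> C)) (y : nat -> (R -> C)),
    (forall n, in_dual s (e n)) /\ (forall n, in_holder w (y n)) /\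
    ex_series (fun n => rpow (real (dual_norm s (e n))) r * rpow (holder_norm w (y n)) r) /\
    (forall u, in_holder s u ->
       is_lim_seq (fun N => holder_norm w (fun x =>
          Cminus (T u x) (sum_n (G := C_AbelianMonoid) (fun n => Cmult (e n u) (y n x)) N))) 0).

Definition cderiv_n (k : nat) (f : R -> C) (x : R) : C :=
  (Derive_n (fun t => Re (f t)) k x, Derive_n (fun t => Im (f t)) k x).

Definition symbol_class (m rho delta : R) (a : R -> Z -> C) : Prop :=
  (forall xi x, a (x + 1) xi = a x xi) /\
  (forall xi k x, ex_derive_n (fun t => Re (a t xi)) k x /\
                  ex_derive_n (fun t => Im (a t xi)) k x) /\
  (forall beta : nat, (beta <= 2)%nat -> exists C_beta : R,
     forall x xi, Cmod (cderiv_n beta (fun t => a t xi) x)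
                  <= C_beta * Rpower (japan xi) (m + delta * INR beta)).

Definition Top (a : R -> Z -> C) (u : R -> C) : R -> C :=
  fun x => zsum (fun xi => Cmult (Cmult (cexp2pi (x * IZR xi)) (a x xi)) (fourier u xi)).

(* Main.v *)
Require Import Defs.
From Stdlib Require Import Reals Lra Lia ZArith FunctionalExtensionality.
From Coquelicot Require Import Coquelicot.
Open Scope R_scope.

Lemma lub_fin (E : R -> Prop) (t0 M : R) :
  E t0 -> (forall t, E t -> t <= M) ->
  is_finite (Lub_Rbar E) /\ t0 <= real (Lub_Rbar E) <= M.
Proof.
  intros H0 HM. destruct (Lub_Rbar_correct E) as [Hub Hlub].
  destruct (Lub_Rbar E) as [l| |] eqn:El.
  - split; [reflexivity|]. split.
    + exact (Hub t0 H0).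
    + exact (Hlub (Finite M) (fun t Ht => HM t Ht)).
  - exfalso. exact (Hlub (Finite M) (fun t Ht => HM t Ht)).
  - exfalso. exact (Hub t0 H0).
Qed.


Lemma lub_ge (E : R -> Prop) t :
  is_finite (Lub_Rbar E) -> E t -> t <= real (Lub_Rbar E).
Proof.
  intros Hf Ht. destruct (Lub_Rbar_correct E) as [Hub _].
  specialize (Hub t Ht). rewrite <- Hf in Hub. exact Hub.
Qed.


Lemma Cmod_le_ReIm (z : C) : Cmod z <= Rabs (fst z) + Rabs (snd z).
Proof.
  destruct z as [a b]. unfold Cmod; simpl.
  pose proof (Rabs_pos a); pose proof (Rabs_pos b).
  rewrite <- (sqrt_Rsqr (Rabs a + Rabs b)) by lra.
  apply sqrt_le_1_alt. unfold Rsqr.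
  assert (Ha : a * a = Rabs a * Rabs a) by (rewrite <- Rabs_mult; rewrite Rabs_right; nra).
  assert (Hb : b * b = Rabs b * Rabs b) by (rewrite <- Rabs_mult; rewrite Rabs_right; nra).
  rewrite !Rmult_1_r, Ha, Hb. nra.
Qed.

Lemma Rpower_pos' x y : 0 < Rpower x y.
Proof. unfold Rpower. apply exp_pos. Qed.

Lemma holder_bounds (w H S : R) (f : R -> C) :
  (forall x h, h <> 0 -> Cmod (Cminus (f (x+h)) (f x)) <= H * Rpower (Rabs h) w) ->
  (forall x, Cmod (f x) <= S) ->
  is_finite (holder_semi w f) /\ is_finite (sup_norm f) /\ 0 <= holder_norm w f <= H + S.
Proof.
  intros HH HS.
  assert (A : is_finite (holder_semi w f) /\
     Cmod (Cminus (f (0+1)) (f 0)) / Rpower (Rabs 1) w <= real (holder_semi w f) <= H).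
  { apply lub_fin.
    - exists 0, 1. split; [lra|reflexivity].
    - intros t [x [h [Hh ->]]]. pose proof (Rpower_pos' (Rabs h) w).
      apply Rmult_le_reg_r with (Rpower (Rabs h) w); auto.
      unfold Rdiv. rewrite Rmult_assoc, Rinv_l by lra. rewrite Rmult_1_r. auto. }
  assert (B : is_finite (sup_norm f) /\ Cmod (f 0) <= real (sup_norm f) <= S).
  { apply lub_fin. exists 0; reflexivity. intros t [x ->]; auto. }
  destruct A as [A1 A2]; destruct B as [B1 B2].
  split; auto. split; auto. unfold holder_norm.
  pose proof (Cmod_ge_0 (f 0)). pose proof (Cmod_ge_0 (Cminus (f (0+1)) (f 0))).
  pose proof (Rpower_pos' (Rabs 1) w).
  assert (0 <= Cmod (Cminus (f (0 + 1)) (f 0)) / Rpower (Rabs 1) w).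
  { unfold Rdiv. apply Rmult_le_pos; auto. left; apply Rinv_0_lt_compat; auto. }
  lra.
Qed.

Lemma holder_use_semi (s : R) (u : R -> C) : in_holder s u ->
  forall x h, h <> 0 -> Cmod (Cminus (u (x+h)) (u x)) <= real (holder_semi s u) * Rpower (Rabs h) s.
Proof.
  intros [_ [Hf _]] x h Hh.
  assert (Hl := lub_ge _ _ Hf (ex_intro _ x (ex_intro _ h (conj Hh eq_refl)))).
  pose proof (Rpower_pos' (Rabs h) s).
  unfold Rdiv in Hl. apply Rmult_le_compat_r with (r := Rpower (Rabs h) s) in Hl; [|lra].
  rewrite Rmult_assoc, Rinv_l in Hl by lra. rewrite Rmult_1_r in Hl. exact Hl.
Qed.

Lemma holder_use_sup (s : R) (u : R -> C) : in_holder s u ->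
  forall x, Cmod (u x) <= real (sup_norm u).
Proof.
  intros [_ [_ Hf]] x. apply (lub_ge _ _ Hf). exists x; reflexivity.
Qed.

Lemma holder_semi_nonneg (s : R) (u : R -> C) : in_holder s u -> 0 <= real (holder_semi s u).
Proof.
  intros [_ [Hf _]].
  eapply Rle_trans; [|apply (lub_ge _ _ Hf); exists 0, 1; split; [lra|reflexivity]].
  pose proof (Rpower_pos' (Rabs 1) s). pose proof (Cmod_ge_0 (Cminus (u (0+1)) (u 0))).
  unfold Rdiv. apply Rmult_le_pos; auto. left; apply Rinv_0_lt_compat; auto.
Qed.

Lemma holder_sup_le_norm (s : R) (u : R -> C) : in_holder s u ->
  0 <= real (sup_norm u) <= holder_norm s u.
Proof.
  intros Hu. pose proof (holder_semi_nonneg s u Hu).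
  pose proof (holder_use_sup s u Hu 0). pose proof (Cmod_ge_0 (u 0)).
  unfold holder_norm. lra.
Qed.

Lemma ex_series_bounded (a : nat -> R) M :
  (forall n, 0 <= a n) -> (forall N, sum_f_R0 a N <= M) -> ex_series a.
Proof.
  intros Hp HM.
  destruct (growing_cv (sum_f_R0 a)) as [l Hl].
  - intro n. simpl. specialize (Hp (S n)). lra.
  - exists M. intros t [i ->]. apply HM.
  - exists l. apply is_series_Reals. exact Hl.
Qed.

Lemma ln_le_sub1 y : 0 < y -> ln y <= y - 1.
Proof. intros Hy. pose proof (exp_ineq1_le (ln y)). rewrite exp_ln in H; lra. Qed.

Lemma key_ineq (q x : R) : 0 < q -> 1 <= x ->
  q * Rpower (x + 1) (- (q + 1)) <= Rpower x (- q) - Rpower (x + 1) (- q).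
Proof.
  intros Hq Hx. unfold Rpower.
  set (L1 := ln x). set (L2 := ln (x+1)).
  assert (HL : L1 - L2 <= - / (x + 1)).
  { unfold L1, L2. rewrite <- ln_div by lra.
    eapply Rle_trans; [apply ln_le_sub1; apply Rdiv_lt_0_compat; lra|].
    right. field. lra. }
  assert (E2 : exp L2 = x + 1) by (unfold L2; apply exp_ln; lra).
  replace (- q * L1) with (- q * L2 + q * (L2 - L1)) by ring.
  replace (- (q + 1) * L2) with (- q * L2 + - L2) by ring.
  rewrite !exp_plus. rewrite exp_Ropp, E2.
  pose proof (exp_ineq1_le (q * (L2 - L1))).
  pose proof (exp_pos (-q * L2)).
  assert (q * / (x+1) <= q * (L2 - L1)) by (apply Rmult_le_compat_l; lra).
  assert (exp (-q * L2) * (q * / (x+1)) <= exp (- q * L2) * (exp (q * (L2 - L1)) - 1)).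
  { apply Rmult_le_compat_l; lra. }
  nra.
Qed.

Lemma pseries (p : R) : 1 < p -> ex_series (fun n => Rpower (INR n + 1) (- p)).
Proof.
  intros Hp. set (q := p - 1).
  assert (Hq : 0 < q) by (unfold q; lra).
  set (b := fun n : nat => Rpower (INR n + 1) (- q)).
  assert (Hd : forall n, Rpower (INR (S n) + 1) (- p) <= / q * (b n - b (S n))).
  { intro n. unfold b. rewrite S_INR.
    pose proof (key_ineq q (INR n + 1) Hq).
    pose proof (pos_INR n).
    replace (- p) with (- (q + 1)) by (unfold q; ring).
    apply Rmult_le_reg_l with q; auto. rewrite <- Rmult_assoc, Rinv_r by lra. lra. }
  apply ex_series_incr_1. simpl.
  apply ex_series_bounded with (M := / q * b 0%nat).
  - intros n. left. apply Rpower_pos'.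
  - intros N. eapply Rle_trans. apply sum_growing. exact Hd.
    assert (forall N, sum_f_R0 (fun n => / q * (b n - b (S n))) N = / q * (b 0%nat - b (S N))).
    { induction N0; simpl. ring. rewrite IHN0. ring. }
    rewrite H. assert (0 < b (S N)) by apply Rpower_pos'.
    pose proof (Rinv_0_lt_compat q Hq). nra.
Qed.

Definition zen (n : nat) : Z :=
  if Nat.even n then Z.of_nat (Nat.div2 n) else (- Z.of_nat (S (Nat.div2 n)))%Z.

Lemma zen_even k : zen (2 * k) = Z.of_nat k.
Proof. unfold zen. rewrite Nat.even_even, Nat.div2_double. reflexivity. Qed.

Lemma zen_odd k : zen (2 * k + 1) = (- Z.of_nat (S k))%Z.
Proof. unfold zen. rewrite Nat.even_odd. rewrite Nat.add_1_r, Nat.div2_succ_double. reflexivity. Qed.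

Lemma japan_ge1 xi : 1 <= japan xi.
Proof.
  unfold japan. rewrite <- sqrt_1 at 1. apply sqrt_le_1_alt.
  pose proof (pow2_ge_0 (IZR xi)). lra.
Qed.

Lemma japan_ge_abs xi : Rabs (IZR xi) <= japan xi.
Proof.
  unfold japan. rewrite <- sqrt_Rsqr_abs. apply sqrt_le_1_alt.
  unfold Rsqr. simpl. lra.
Qed.

Lemma japan_pos xi : 0 < japan xi.
Proof. pose proof (japan_ge1 xi). lra. Qed.

Lemma japan_pos_nat k : (INR k + 1) / 3 <= japan (Z.of_nat k).
Proof.
  pose proof (japan_ge1 (Z.of_nat k)). pose proof (japan_ge_abs (Z.of_nat k)).
  rewrite <- INR_IZR_INZ, Rabs_right in H0 by (apply Rle_ge, pos_INR). lra.
Qed.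

Lemma japan_neg_nat k : (INR k + 1) / 3 <= japan (- Z.of_nat (S k)).
Proof.
  pose proof (japan_ge_abs (- Z.of_nat (S k))).
  rewrite opp_IZR, <- INR_IZR_INZ, Rabs_Ropp, Rabs_right in H by (apply Rle_ge, pos_INR).
  rewrite S_INR in H. pose proof (pos_INR k). lra.
Qed.

Lemma japan_zen n : (INR n + 1) / 3 <= japan (zen n).
Proof.
  destruct (Nat.Even_or_Odd n) as [[k ->]|[k ->]].
  - rewrite zen_even. pose proof (japan_pos_nat k).
    pose proof (japan_ge1 (Z.of_nat k)). pose proof (japan_ge_abs (Z.of_nat k)).
    rewrite <- INR_IZR_INZ, Rabs_right in H1 by (apply Rle_ge, pos_INR).
    rewrite mult_INR. simpl. lra.
  - rewrite zen_odd. pose proof (japan_ge_abs (- Z.of_nat (S k))).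
    rewrite opp_IZR, <- INR_IZR_INZ, Rabs_Ropp, Rabs_right in H by (apply Rle_ge, pos_INR).
    rewrite S_INR in H. rewrite plus_INR, mult_INR. replace (INR 2) with 2 by (simpl; ring). replace (INR 1) with 1 by reflexivity. pose proof (pos_INR k). lra.
Qed.

Lemma Rpower_neg_anti (y j p : R) : 0 < y -> y <= j -> 0 <= p ->
  Rpower j (- p) <= Rpower y (- p).
Proof.
  intros Hy Hj Hp. rewrite !Rpower_Ropp. apply Rinv_le_contravar.
  apply Rpower_pos'. apply Rle_Rpower_l; lra.
Qed.

Lemma japan_series (phi : nat -> Z) (p : R) : 1 < p ->
  (forall n, (INR n + 1) / 3 <= japan (phi n)) ->
  ex_series (fun n => Rpower (japan (phi n)) (- p)).
Proof.
  intros Hp Hphi.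
  apply (@ex_series_le R_AbsRing R_CompleteNormedModule _ (fun n => Rpower 3 p * Rpower (INR n + 1) (- p))).
  - intros n. change (norm ?x) with (Rabs x). rewrite Rabs_right by (apply Rle_ge; left; apply Rpower_pos').
    pose proof (pos_INR n).
    eapply Rle_trans. apply (Rpower_neg_anti ((INR n + 1) / 3)); auto; lra.
    right. unfold Rdiv. rewrite <- Rpower_mult_distr by lra.
    rewrite Rmult_comm. f_equal. unfold Rpower. rewrite ln_Rinv by lra. f_equal. ring.
  - apply (@ex_series_scal_l R_AbsRing R_NormedModule). apply pseries; auto.
Qed.

Lemma comp_series (f : Z -> R) (phi : nat -> Z) c p : 1 < p ->
  (forall xi, Rabs (f xi) <= c * Rpower (japan xi) (-p)) ->
  (forall n, (INR n + 1) / 3 <= japan (phi n)) ->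
  ex_series (fun n => f (phi n)).
Proof.
  intros Hp Hf Hphi.
  apply (@ex_series_le R_AbsRing R_CompleteNormedModule _ (fun n => c * Rpower (japan (phi n)) (- p))).
  - intros n. apply Hf.
  - apply (@ex_series_scal_l R_AbsRing R_NormedModule). apply japan_series; auto.
Qed.

Lemma sum_zen (f : Z -> R) K :
  sum_f_R0 (fun n => f (zen n)) (2 * K + 1) =
  sum_f_R0 (fun n => f (Z.of_nat n)) K + sum_f_R0 (fun n => f (- Z.of_nat (S n))%Z) K.
Proof.
  induction K.
  - simpl. replace (zen 0) with (Z.of_nat 0) by reflexivity.
    replace (zen 1) with (- Z.of_nat 1)%Z by reflexivity. reflexivity.
  - replace (2 * S K + 1)%nat with (S (S (2 * K + 1))) by lia.
    cbn [sum_f_R0]. rewrite IHK.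
    replace (S (2 * K + 1)) with (2 * S K)%nat by lia.
    replace (S (2 * S K)) with (2 * S K + 1)%nat by lia.
    rewrite zen_even, zen_odd. ring.
Qed.

Lemma Series_is_lim (a : nat -> R) : ex_series a ->
  is_lim_seq (fun N => sum_f_R0 a N) (Series a).
Proof.
  intros H. apply Series_correct in H.
  apply (is_lim_seq_ext (sum_n a)). intros; apply sum_n_Reals. exact H.
Qed.

Lemma interleave (f : Z -> R) c p : 1 < p ->
  (forall xi, Rabs (f xi) <= c * Rpower (japan xi) (-p)) ->
  ex_series (fun n => f (zen n)) /\
  Series (fun n => f (Z.of_nat n)) + Series (fun n => f (- Z.of_nat (S n))%Z) = Series (fun n => f (zen n)).
Proof.
  intros Hp Hf.
  assert (Ez := comp_series f zen c p Hp Hf japan_zen).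
  assert (Ep := comp_series f (fun n => Z.of_nat n) c p Hp Hf japan_pos_nat).
  assert (En := comp_series f (fun n => (- Z.of_nat (S n))%Z) c p Hp Hf japan_neg_nat).
  split; auto.
  apply Series_is_lim in Ez, Ep, En.
  assert (Hphi : forall n, (2 * n + 1 < 2 * S n + 1)%nat) by (intros; lia).
  assert (H1 := is_lim_seq_subseq _ _ (fun K => (2 * K + 1)%nat)
                  (eventually_subseq (fun K => (2 * K + 1)%nat) Hphi) Ez).
  assert (H2 := is_lim_seq_plus' _ _ _ _ Ep En).
  apply (is_lim_seq_ext _ _ _ (fun K => eq_sym (sum_zen f K))) in H2.
  apply is_lim_seq_unique in H1, H2. simpl in H1, H2. rewrite H1 in H2. 
  injection H2. auto.
Qed.

Lemma holder_cont_comp (s : R) (u : R -> C) (g : C -> R) :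
  0 < s -> in_holder s u -> (forall z, Rabs (g z) <= Cmod z) ->
  (forall z1 z2, g (Cminus z1 z2) = g z1 - g z2) ->
  forall x, continuity_pt (fun t => g (u t)) x.
Proof.
  intros Hs Hu Hg Hlin x.
  set (H := real (holder_semi s u)).
  assert (H0 : 0 <= H) by (apply holder_semi_nonneg; auto).
  intros eps Heps.
  exists (Rpower (eps / (H + 1)) (/ s)). split.
  { apply Rlt_gt, Rpower_pos'. }
  intros y [[_ Hyx] Hd]. simpl in Hd |- *. unfold Rdist in Hd |- *.
  rewrite <- Hlin. eapply Rle_lt_trans. apply Hg.
  replace y with (x + (y - x)) by ring.
  eapply Rle_lt_trans. apply (holder_use_semi s u Hu x (y - x)). lra.
  replace (x + (y - x) - x) with (y - x) by ring. fold H.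
  assert (Hpos : 0 < Rabs (y - x)) by (apply Rabs_pos_lt; lra).
  assert (Hlt : Rpower (Rabs (y - x)) s < eps / (H + 1)).
  { replace (eps / (H + 1)) with (Rpower (Rpower (eps / (H + 1)) (/ s)) s).
    apply Rlt_Rpower_l; auto.
    rewrite Rpower_mult, Rinv_l, Rpower_1 by (try apply Rdiv_lt_0_compat; lra). reflexivity. }
  apply Rle_lt_trans with ((H + 1) * Rpower (Rabs (y - x)) s).
  { pose proof (Rpower_pos' (Rabs (y - x)) s). nra. }
  apply Rmult_lt_compat_l with (r := H + 1) in Hlt; [|lra].
  replace ((H + 1) * (eps / (H + 1))) with eps in Hlt by (field; lra). exact Hlt.
Qed.

Lemma holder_cont_re s u : 0 < s -> in_holder s u -> forall x, continuity_pt (fun t => fst (u t)) x.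
Proof.
  intros Hs Hu. apply (holder_cont_comp s u (fun z => fst z)); auto.
  intros z; apply re_le_Cmod.
Qed.

Lemma im_le_Cmod (z : C) : Rabs (snd z) <= Cmod z.
Proof.
  destruct z as [a b]. eapply Rle_trans; [|apply (Rmax_Cmod (a, b))]. simpl. apply Rmax_r.
Qed.

Lemma holder_cont_im s u : 0 < s -> in_holder s u -> forall x, continuity_pt (fun t => snd (u t)) x.
Proof.
  intros Hs Hu. apply (holder_cont_comp s u (fun z => snd z)); auto.
  intros z; apply im_le_Cmod.
Qed.

Lemma cont_cos_lin (k : R) x : continuity_pt (fun t => cos (2 * PI * (- t * k))) x.
Proof.
  apply continuity_pt_filterlim. apply (ex_derive_continuous (fun t => cos (2 * PI * (- t * k)))).
  auto_derive. auto.
Qed.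

Lemma cont_sin_lin (k : R) x : continuity_pt (fun t => sin (2 * PI * (- t * k))) x.
Proof.
  apply continuity_pt_filterlim. apply (ex_derive_continuous (fun t => sin (2 * PI * (- t * k)))).
  auto_derive. auto.
Qed.

Definition fint1 (u : R -> C) (xi : Z) (x : R) : R := fst (Cmult (cexp2pi (- x * IZR xi)) (u x)).
Definition fint2 (u : R -> C) (xi : Z) (x : R) : R := snd (Cmult (cexp2pi (- x * IZR xi)) (u x)).

Lemma fint1_ex s u xi : 0 < s -> in_holder s u -> ex_RInt (fint1 u xi) 0 1.
Proof.
  intros Hs Hu. apply (@ex_RInt_continuous R_CompleteNormedModule). intros z _.
  apply continuity_pt_filterlim. unfold fint1, cexp2pi. simpl.
  apply continuity_pt_minus; apply continuity_pt_mult;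
    first [apply cont_cos_lin | apply cont_sin_lin | apply (holder_cont_re s u); auto | apply (holder_cont_im s u); auto].
Qed.

Lemma fint2_ex s u xi : 0 < s -> in_holder s u -> ex_RInt (fint2 u xi) 0 1.
Proof.
  intros Hs Hu. apply (@ex_RInt_continuous R_CompleteNormedModule). intros z _.
  apply continuity_pt_filterlim. unfold fint2, cexp2pi. simpl.
  apply continuity_pt_plus; apply continuity_pt_mult;
    first [apply cont_cos_lin | apply cont_sin_lin | apply (holder_cont_re s u); auto | apply (holder_cont_im s u); auto].
Qed.

Lemma fourier_comp s u xi : 0 < s -> in_holder s u ->
  fourier u xi = (RInt (fint1 u xi) 0 1, RInt (fint2 u xi) 0 1).
Proof.
  intros Hs Hu. unfold fourier. apply (@is_RInt_unique C_R_CompleteNormedModule).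
  apply (@is_RInt_fct_extend_pair R_NormedModule R_NormedModule).
  - apply (RInt_correct (V := R_CompleteNormedModule)). apply (fint1_ex s); auto.
  - apply (RInt_correct (V := R_CompleteNormedModule)). apply (fint2_ex s); auto.
Qed.

Lemma RInt_lin2 (f g : R -> R) c1 c2 : ex_RInt f 0 1 -> ex_RInt g 0 1 ->
  is_RInt (fun x => c1 * f x + c2 * g x) 0 1 (c1 * RInt f 0 1 + c2 * RInt g 0 1).
Proof.
  intros Hf Hg. apply (@is_RInt_plus R_NormedModule); apply (@is_RInt_scal R_NormedModule);
  apply (RInt_correct (V := R_CompleteNormedModule)); auto.
Qed.

Lemma fourier_comp' u xi : ex_RInt (fint1 u xi) 0 1 -> ex_RInt (fint2 u xi) 0 1 ->
  fourier u xi = (RInt (fint1 u xi) 0 1, RInt (fint2 u xi) 0 1).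
Proof.
  intros H1 H2. unfold fourier. apply (@is_RInt_unique C_R_CompleteNormedModule).
  apply (@is_RInt_fct_extend_pair R_NormedModule R_NormedModule).
  - apply (RInt_correct (V := R_CompleteNormedModule)). auto.
  - apply (RInt_correct (V := R_CompleteNormedModule)). auto.
Qed.

Lemma lin_ex f g h c1 c2 : ex_RInt f 0 1 -> ex_RInt g 0 1 ->
  (forall x, h x = c1 * f x + c2 * g x) -> ex_RInt h 0 1 /\ RInt h 0 1 = c1 * RInt f 0 1 + c2 * RInt g 0 1.
Proof.
  intros Hf Hg Hh. pose proof (RInt_lin2 f g c1 c2 Hf Hg) as HI.
  apply (is_RInt_ext _ h) in HI; [|intros; symmetry; apply Hh].
  split. eexists; eauto. apply (@is_RInt_unique R_CompleteNormedModule); auto.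
Qed.

Lemma fourier_plus s u v xi : 0 < s -> in_holder s u -> in_holder s v ->
  fourier (fun x => Cplus (u x) (v x)) xi = Cplus (fourier u xi) (fourier v xi).
Proof.
  intros Hs Hu Hv.
  pose proof (fint1_ex s u xi Hs Hu). pose proof (fint2_ex s u xi Hs Hu).
  pose proof (fint1_ex s v xi Hs Hv). pose proof (fint2_ex s v xi Hs Hv).
  destruct (lin_ex (fint1 u xi) (fint1 v xi) (fint1 (fun x => Cplus (u x) (v x)) xi) 1 1) as [E1 R1]; auto.
  { intros x. unfold fint1, Cmult, Cplus. simpl. ring. }
  destruct (lin_ex (fint2 u xi) (fint2 v xi) (fint2 (fun x => Cplus (u x) (v x)) xi) 1 1) as [E2 R2]; auto.
  { intros x. unfold fint2, Cmult, Cplus. simpl. ring. }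
  rewrite !fourier_comp'; auto. rewrite R1, R2. unfold Cplus. simpl. rewrite !Rmult_1_l; reflexivity.
Qed.

Lemma fourier_scal s (c : C) u xi : 0 < s -> in_holder s u ->
  fourier (fun x => Cmult c (u x)) xi = Cmult c (fourier u xi).
Proof.
  intros Hs Hu.
  pose proof (fint1_ex s u xi Hs Hu). pose proof (fint2_ex s u xi Hs Hu).
  destruct (lin_ex (fint1 u xi) (fint2 u xi) (fint1 (fun x => Cmult c (u x)) xi) (fst c) (- snd c)) as [E1 R1]; auto.
  { intros x. unfold fint1, fint2, Cmult. simpl. ring. }
  destruct (lin_ex (fint2 u xi) (fint1 u xi) (fint2 (fun x => Cmult c (u x)) xi) (fst c) (snd c)) as [E2 R2]; auto.
  { intros x. unfold fint1, fint2, Cmult. simpl. ring. }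
  rewrite !fourier_comp'; auto. rewrite R1, R2. unfold Cmult. simpl. f_equal; unfold Rminus; rewrite ?Ropp_mult_distr_l; reflexivity.
Qed.

Lemma Cmod_cexp2pi t : Cmod (cexp2pi t) = 1.
Proof.
  unfold Cmod, cexp2pi. simpl. rewrite <- sqrt_1 at 3. f_equal.
  pose proof (sin2_cos2 (2 * PI * t)). unfold Rsqr in H. lra.
Qed.

Lemma fourier_bound s u xi : 0 < s -> in_holder s u ->
  Cmod (fourier u xi) <= 2 * real (sup_norm u).
Proof.
  intros Hs Hu. rewrite (fourier_comp s) by auto.
  eapply Rle_trans. apply Cmod_le_ReIm. simpl.
  set (M := real (sup_norm u)).
  assert (HB : forall g : C -> R, (forall z, Rabs (g z) <= Cmod z) ->
     forall t, Rabs (g (Cmult (cexp2pi (- t * IZR xi)) (u t))) <= M).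
  { intros g Hg t. eapply Rle_trans. apply Hg. rewrite Cmod_mult, Cmod_cexp2pi, Rmult_1_l.
    apply (holder_use_sup s u Hu). }
  assert (A1 : Rabs (RInt (fint1 u xi) 0 1) <= (1 - 0) * M).
  { apply abs_RInt_le_const. lra. apply (fint1_ex s); auto. intros t _. apply (HB fst). apply re_le_Cmod. }
  assert (A2 : Rabs (RInt (fint2 u xi) 0 1) <= (1 - 0) * M).
  { apply abs_RInt_le_const. lra. apply (fint2_ex s); auto. intros t _. apply (HB snd). apply im_le_Cmod. }
  lra.
Qed.

Lemma deriv_re_im (A B A' B' : R -> R) (z : R) :
  (forall t, is_derive A t (A' t)) -> (forall t, is_derive B t (B' t)) ->
  forall t,
  is_derive (fun t => cos (2*PI*(t*z)) * A t - sin (2*PI*(t*z)) * B t) t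
    (-(sin (2*PI*(t*z))) * (2*PI*z) * A t + cos (2*PI*(t*z)) * A' t
     - (cos (2*PI*(t*z)) * (2*PI*z) * B t + sin (2*PI*(t*z)) * B' t)) /\
  is_derive (fun t => cos (2*PI*(t*z)) * B t + sin (2*PI*(t*z)) * A t) t
    (-(sin (2*PI*(t*z))) * (2*PI*z) * B t + cos (2*PI*(t*z)) * B' t
     + (cos (2*PI*(t*z)) * (2*PI*z) * A t + sin (2*PI*(t*z)) * A' t)).
Proof.
  intros HA HB t.
  assert (EA : Derive (fun x => A x) t = A' t) by (apply is_derive_unique; apply HA).
  assert (EB : Derive (fun x => B x) t = B' t) by (apply is_derive_unique; apply HB).
  assert (XA : ex_derive (fun x => A x) t) by (eexists; apply HA).
  assert (XB : ex_derive (fun x => B x) t) by (eexists; apply HB).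
  split; auto_derive; try tauto; rewrite ?EA, ?EB; ring.
Qed.

Lemma abs4 a b c d : Rabs (a + b - (c + d)) <= Rabs a + Rabs b + Rabs c + Rabs d.
Proof.
  pose proof (Rabs_triang (a+b) (-(c+d))). pose proof (Rabs_triang a b).
  pose proof (Rabs_triang c d). rewrite Rabs_Ropp in H. unfold Rminus. lra.
Qed.

Lemma abs4' a b c d : Rabs (a + b + (c + d)) <= Rabs a + Rabs b + Rabs c + Rabs d.
Proof.
  pose proof (Rabs_triang (a+b) (c+d)). pose proof (Rabs_triang a b).
  pose proof (Rabs_triang c d). lra.
Qed.

Lemma abs_trig_bound (c s0 k X Y X' Y' : R) :
  Rabs c <= 1 -> Rabs s0 <= 1 ->
  Rabs (- s0 * k * X + c * X' - (c * k * Y + s0 * Y')) <= Rabs k * (Rabs X + Rabs Y) + Rabs X' + Rabs Y' /\ Rabs (- s0 * k * Y + c * Y' + (c * k * X + s0 * X')) <= Rabs k * (Rabs X + Rabs Y) + Rabs X' + Rabs Y'.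
Proof.
  intros Hc Hs.
  assert (H1 : forall a b, Rabs a <= 1 -> Rabs (a * b) <= Rabs b).
  { intros a b Ha. rewrite Rabs_mult. pose proof (Rabs_pos b). nra. }
  assert (H2 : forall a b c0, Rabs a <= 1 -> Rabs (a * b * c0) <= Rabs b * Rabs c0).
  { intros a b c0 Ha. rewrite !Rabs_mult. pose proof (Rabs_pos b). pose proof (Rabs_pos c0).
    pose proof (Rabs_pos a). assert (0 <= Rabs b * Rabs c0) by nra. nra. }
  assert (Hs' : Rabs (- s0) <= 1) by (rewrite Rabs_Ropp; auto).
  split.
  - eapply Rle_trans. apply abs4.
    pose proof (H2 _ k X Hs'). pose proof (H1 _ X' Hc). pose proof (H2 _ k Y Hc). pose proof (H1 _ Y' Hs).
    rewrite Rmult_plus_distr_l; lra.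
  - eapply Rle_trans. apply abs4'.
    pose proof (H2 _ k Y Hs'). pose proof (H1 _ Y' Hc). pose proof (H2 _ k X Hc). pose proof (H1 _ X' Hs).
    rewrite Rmult_plus_distr_l; lra.
Qed.

Lemma interp (D A B t w : R) : 0 <= D -> D <= A -> D <= t * B -> 0 < A -> 0 < B -> 0 < t -> 0 < w < 1 ->
  D <= Rpower A (1 - w) * Rpower B w * Rpower t w.
Proof.
  intros H0 HA HB PA PB Pt Hw.
  pose proof (Rpower_pos' A (1-w)). pose proof (Rpower_pos' B w). pose proof (Rpower_pos' t w).
  destruct H0 as [Dp|D0].
  2:{ subst D. apply Rmult_le_pos; [apply Rmult_le_pos|]; lra. }
  replace D with (Rpower D (1 - w) * Rpower D w).
  2:{ rewrite <- Rpower_plus. replace (1 - w + w) with 1 by ring. apply Rpower_1; auto. }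
  rewrite Rmult_assoc. apply Rmult_le_compat.
  - left; apply Rpower_pos'.
  - left; apply Rpower_pos'.
  - apply Rle_Rpower_l; lra.
  - rewrite Rpower_mult_distr by auto. apply Rle_Rpower_l; try lra.
Qed.

Lemma pw_combine K J m w : 0 < K -> 1 <= J -> 0 < w < 1 ->
  Rpower (K * Rpower J m) (1 - w) * Rpower (2 * K * Rpower J (m + 1)) w <= 2 * K * Rpower J (m + w).
Proof.
  intros HK HJ Hw.
  pose proof (Rpower_pos' J m). pose proof (Rpower_pos' J (m+1)).
  rewrite <- !Rpower_mult_distr by (try apply Rpower_pos'; lra).
  rewrite !Rpower_mult.
  assert (E : Rpower K (1 - w) * Rpower J (m * (1 - w)) * (Rpower 2 w * Rpower K w * Rpower J ((m + 1) * w))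
            = (Rpower K (1 - w) * Rpower K w) * (Rpower J (m * (1 - w)) * Rpower J ((m + 1) * w)) * Rpower 2 w) by ring.
  rewrite E. rewrite <- !Rpower_plus.
  replace (1 - w + w) with 1 by ring. replace (m * (1 - w) + (m + 1) * w) with (m + w) by ring.
  rewrite Rpower_1 by lra.
  assert (Rpower 2 w <= 2).
  { rewrite <- (Rpower_1 2) at 2 by lra. apply Rle_Rpower; lra. }
  pose proof (Rpower_pos' J (m + w)).
  assert (0 < K * Rpower J (m + w)) by (apply Rmult_lt_0_compat; auto).
  nra.
Qed.

Definition yf (a : R -> Z -> C) (xi : Z) (x : R) : C := Cmult (cexp2pi (x * IZR xi)) (a x xi).

Lemma cderiv0 (f : R -> C) x : cderiv_n 0 f x = f x.
Proof. unfold cderiv_n. simpl. unfold Re, Im. destruct (f x); reflexivity. Qed.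

Lemma fst_Cminus (u v : C) : fst (Cminus u v) = fst u - fst v.
Proof. destruct u, v; reflexivity. Qed.
Lemma snd_Cminus (u v : C) : snd (Cminus u v) = snd u - snd v.
Proof. destruct u, v; reflexivity. Qed.

Lemma Cmod_minus_le z1 z2 : Cmod (Cminus z1 z2) <= Cmod z1 + Cmod z2.
Proof.
  unfold Cminus. eapply Rle_trans. apply Cmod_triangle. rewrite Cmod_opp. lra.
Qed.

Lemma y_bounds m rho delta w a : symbol_class m rho delta a -> 0 <= delta <= 1 -> 0 < w < 1 ->
  exists K, 0 < K /\ forall xi,
   (forall x, Cmod (yf a xi x) <= K * Rpower (japan xi) (m + w)) /\
   (forall x h, h <> 0 -> Cmod (Cminus (yf a xi (x+h)) (yf a xi x)) <= K * Rpower (japan xi) (m + w) * Rpower (Rabs h) w).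
Proof.
  intros [Hper [Hder Hb]] Hd Hw.
  destruct (Hb 0%nat) as [C0 HC0]; [lia|].
  destruct (Hb 1%nat) as [C1 HC1]; [lia|].
  assert (Ha0 : forall x xi, Cmod (a x xi) <= C0 * Rpower (japan xi) m).
  { intros x xi. specialize (HC0 x xi). rewrite cderiv0 in HC0. simpl INR in HC0.
    rewrite Rmult_0_r, Rplus_0_r in HC0. exact HC0. }
  assert (Ha1 : forall x xi, Cmod (Derive (fun t => fst (a t xi)) x, Derive (fun t => snd (a t xi)) x)
                  <= C1 * Rpower (japan xi) (m + delta)).
  { intros x xi. specialize (HC1 x xi). simpl INR in HC1. rewrite Rmult_1_r in HC1. exact HC1. }
  assert (C0p : 0 <= C0).
  { pose proof (Ha0 0 0%Z). pose proof (Cmod_ge_0 (a 0 0%Z)). pose proof (Rpower_pos' (japan 0) m).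
    destruct (Rle_or_lt 0 C0); auto. nra. }
  assert (C1p : 0 <= C1).
  { pose proof (Ha1 0 0%Z). pose proof (Cmod_ge_0 (Derive (fun t => fst (a t 0%Z)) 0, Derive (fun t => snd (a t 0%Z)) 0)).
    pose proof (Rpower_pos' (japan 0) (m + delta)).
    destruct (Rle_or_lt 0 C1); auto. nra. }
  pose proof PI_RGT_0 as Hpi.
  set (K := 4 * PI * C0 + 2 * C1 + 2 * C0 + 1).
  assert (HK : 0 < K) by (unfold K; nra).
  exists (2 * K). split; [lra|]. intros xi.
  set (J := japan xi). set (z := IZR xi).
  assert (HJ : 1 <= J) by apply japan_ge1.
  assert (Hz : Rabs z <= J) by apply japan_ge_abs.
  pose proof (Rpower_pos' J m) as PJm.
  assert (HJmw : Rpower J m <= Rpower J (m + w)) by (apply Rle_Rpower; lra).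
  assert (HJ1 : Rpower J (m + 1) = J * Rpower J m).
  { rewrite Rpower_plus, Rpower_1 by lra. ring. }
  assert (HJd : Rpower J (m + delta) <= Rpower J (m + 1)) by (apply Rle_Rpower; lra).
  assert (Hsup : forall x, Cmod (yf a xi x) <= C0 * Rpower J m).
  { intros x. unfold yf. rewrite Cmod_mult, Cmod_cexp2pi, Rmult_1_l. apply Ha0. }
  split.
  { intros x. eapply Rle_trans. apply Hsup. apply Rmult_le_compat; try lra. unfold K; nra. }
  intros x h Hh.
  set (A := fun t => fst (a t xi)). set (B := fun t => snd (a t xi)).
  assert (dA : forall t, is_derive A t (Derive A t)).
  { intros t. apply Derive_correct. destruct (Hder xi 1%nat t) as [H1 _]. exact H1. }
  assert (dB : forall t, is_derive B t (Derive B t)).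
  { intros t. apply Derive_correct. destruct (Hder xi 1%nat t) as [_ H1]. exact H1. }
  set (Dm := K * Rpower J (m + 1)).
  assert (Hdb : forall t,
     Rabs (-(sin (2*PI*(t*z))) * (2*PI*z) * A t + cos (2*PI*(t*z)) * Derive A t
     - (cos (2*PI*(t*z)) * (2*PI*z) * B t + sin (2*PI*(t*z)) * Derive B t)) <= Dm /\
     Rabs (-(sin (2*PI*(t*z))) * (2*PI*z) * B t + cos (2*PI*(t*z)) * Derive B t
     + (cos (2*PI*(t*z)) * (2*PI*z) * A t + sin (2*PI*(t*z)) * Derive A t)) <= Dm).
  { intros t.
    destruct (abs_trig_bound (cos (2*PI*(t*z))) (sin (2*PI*(t*z))) (2*PI*z) (A t) (B t) (Derive A t) (Derive B t))
      as [T1 T2]; try apply Rabs_le; try apply COS_bound; try apply SIN_bound.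
    assert (Hk : Rabs (2 * PI * z) <= 2 * PI * J).
    { rewrite Rabs_mult, (Rabs_right (2 * PI)) by lra. nra. }
    assert (HAB : Rabs (A t) + Rabs (B t) <= 2 * (C0 * Rpower J m)).
    { pose proof (re_le_Cmod (a t xi)). pose proof (im_le_Cmod (a t xi)). pose proof (Ha0 t xi).
      unfold A, B. unfold Re in *. fold J in H1. lra. }
    assert (HAB' : Rabs (Derive A t) + Rabs (Derive B t) <= 2 * (C1 * Rpower J (m + 1))).
    { pose proof (Ha1 t xi). fold J in H. 
      pose proof (re_le_Cmod (Derive A t, Derive B t)). pose proof (im_le_Cmod (Derive A t, Derive B t)).
      unfold Re in H0. simpl in H0, H1. unfold A, B in *.
      assert (C1 * Rpower J (m + delta) <= C1 * Rpower J (m + 1)) by (apply Rmult_le_compat_l; auto).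
      lra. }
    assert (E : Rabs (2 * PI * z) * (Rabs (A t) + Rabs (B t)) <= 2 * PI * J * (2 * (C0 * Rpower J m))).
    { apply Rmult_le_compat; auto. apply Rabs_pos. pose proof (Rabs_pos (A t)); pose proof (Rabs_pos (B t)); lra. }
    assert (Dm = 4 * PI * C0 * (J * Rpower J m) + (2 * C1 + 2 * C0 + 1) * Rpower J (m + 1)) by (unfold Dm, K; rewrite HJ1; ring).
    assert (0 <= (2 * C0 + 1) * Rpower J (m + 1)) by (apply Rmult_le_pos; [lra| left; apply Rpower_pos']).
    rewrite HJ1 in *. split; nra. }
  assert (Hre : Rabs (fst (yf a xi (x + h)) - fst (yf a xi x)) <= Dm * Rabs h).
  { replace (Rabs h) with (Rabs ((x + h) - x)) by (f_equal; ring).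
    apply (bounded_variation (fun t => fst (yf a xi t)) (fun t =>
     -(sin (2*PI*(t*z))) * (2*PI*z) * A t + cos (2*PI*(t*z)) * Derive A t
     - (cos (2*PI*(t*z)) * (2*PI*z) * B t + sin (2*PI*(t*z)) * Derive B t))).
    intros t _. split; [|apply Hdb].
    exact (proj1 (deriv_re_im A B (Derive A) (Derive B) z dA dB t)). }
  assert (Him : Rabs (snd (yf a xi (x + h)) - snd (yf a xi x)) <= Dm * Rabs h).
  { replace (Rabs h) with (Rabs ((x + h) - x)) by (f_equal; ring).
    apply (bounded_variation (fun t => snd (yf a xi t)) (fun t =>
     -(sin (2*PI*(t*z))) * (2*PI*z) * B t + cos (2*PI*(t*z)) * Derive B t
     + (cos (2*PI*(t*z)) * (2*PI*z) * A t + sin (2*PI*(t*z)) * Derive A t))).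
    intros t _. split; [|apply Hdb].
    exact (proj2 (deriv_re_im A B (Derive A) (Derive B) z dA dB t)). }
  set (Dl := Cmod (Cminus (yf a xi (x + h)) (yf a xi x))).
  assert (H1 : Dl <= Rabs h * (2 * K * Rpower J (m + 1))).
  { unfold Dl. eapply Rle_trans. apply Cmod_le_ReIm. rewrite fst_Cminus, snd_Cminus. unfold Dm in *. lra. }
  assert (H2 : Dl <= K * Rpower J m).
  { unfold Dl. eapply Rle_trans. apply Cmod_minus_le. pose proof (Hsup (x + h)). pose proof (Hsup x).
    assert (2 * C0 <= K) by (unfold K; nra). nra. }
  assert (Hh' : 0 < Rabs h) by (apply Rabs_pos_lt; auto).
  pose proof (interp Dl (K * Rpower J m) (2 * K * Rpower J (m + 1)) (Rabs h) w (Cmod_ge_0 _) H2 H1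
     ltac:(apply Rmult_lt_0_compat; auto) ltac:(apply Rmult_lt_0_compat; [lra|apply Rpower_pos']) Hh' Hw).
  eapply Rle_trans. apply H.
  apply Rmult_le_compat_r. left; apply Rpower_pos'.
  apply pw_combine; auto.
Qed.

Lemma series_tail_bounds (f1 f2 : R -> nat -> R) (b : nat -> R) (w : R) (M : nat) :
  ex_series b ->
  (forall x n, Rabs (f1 x n) <= b n) -> (forall x n, Rabs (f2 x n) <= b n) ->
  (forall x h n, h <> 0 -> Rabs (f1 (x + h) n - f1 x n) <= b n * Rpower (Rabs h) w) ->
  (forall x h n, h <> 0 -> Rabs (f2 (x + h) n - f2 x n) <= b n * Rpower (Rabs h) w) ->
  let T := Series (fun k => b (M + k)%nat) in
  let F := fun x => (Series (fun k => f1 x (M + k)%nat), Series (fun k => f2 x (M + k)%nat)) : C in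
  (forall x, Cmod (F x) <= 2 * T) /\
  (forall x h, h <> 0 -> Cmod (Cminus (F (x + h)) (F x)) <= 2 * T * Rpower (Rabs h) w).
Proof.
  intros Hb H1 H2 H1' H2' T F.
  assert (HbM : ex_series (fun k => b (M + k)%nat)) by (apply (ex_series_incr_n b M); auto).
  assert (Gen : forall g : nat -> R, forall c, 0 <= c -> (forall k, Rabs (g k) <= b (M + k)%nat * c) ->
            ex_series g /\ Rabs (Series g) <= T * c).
  { intros g c Hc Hg.
    assert (Eb : ex_series (fun k => b (M + k)%nat * c)).
    { apply (ex_series_ext (fun k => scal c (b (M + k)%nat))). intros; unfold scal; simpl; unfold mult; simpl; ring.
      apply (@ex_series_scal_l R_AbsRing R_NormedModule); auto. }
    assert (Ea : ex_series (fun k => Rabs (g k))).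
    { apply (@ex_series_le R_AbsRing R_CompleteNormedModule _ (fun k => b (M + k)%nat * c)); auto.
      intros k. change (norm ?x) with (Rabs x). rewrite Rabs_Rabsolu. auto. }
    split.
    - apply (@ex_series_le R_AbsRing R_CompleteNormedModule _ (fun k => b (M + k)%nat * c)); auto.
    - eapply Rle_trans. apply Series_Rabs; auto.
      unfold T. rewrite <- Series_scal_r. apply Series_le; auto.
      intros k; split; [apply Rabs_pos|auto]. }
  assert (Hf1 : forall x, ex_series (fun k => f1 x (M + k)%nat) /\ Rabs (Series (fun k => f1 x (M + k)%nat)) <= T * 1).
  { intros x. apply Gen; [lra|]. intros k; rewrite Rmult_1_r; auto. }
  assert (Hf2 : forall x, ex_series (fun k => f2 x (M + k)%nat) /\ Rabs (Series (fun k => f2 x (M + k)%nat)) <= T * 1).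
  { intros x. apply Gen; [lra|]. intros k; rewrite Rmult_1_r; auto. }
  split.
  - intros x. eapply Rle_trans. apply Cmod_le_ReIm. unfold F; simpl.
    destruct (Hf1 x), (Hf2 x). lra.
  - intros x h Hh. eapply Rle_trans. apply Cmod_le_ReIm. unfold F. rewrite fst_Cminus, snd_Cminus. simpl.
    destruct (Hf1 x) as [E1 _], (Hf2 x) as [E2 _], (Hf1 (x + h)) as [E1' _], (Hf2 (x + h)) as [E2' _].
    rewrite <- !Series_minus by auto.
    pose proof (Rpower_pos' (Rabs h) w).
    destruct (Gen (fun k => f1 (x + h) (M + k)%nat - f1 x (M + k)%nat) (Rpower (Rabs h) w)) as [_ G1]; [lra| intros; auto |].
    destruct (Gen (fun k => f2 (x + h) (M + k)%nat - f2 x (M + k)%nat) (Rpower (Rabs h) w)) as [_ G2]; [lra| intros; auto |].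
    lra.
Qed.

Lemma cos_periodZ t k : cos (t + 2 * IZR k * PI) = cos t.
Proof.
  destruct (Z.le_gt_cases 0 k) as [Hk|Hk].
  - rewrite <- (Z2Nat.id k Hk), <- INR_IZR_INZ. apply cos_period.
  - replace k with (- Z.of_nat (Z.to_nat (- k)))%Z by lia.
    rewrite opp_IZR, <- INR_IZR_INZ.
    rewrite <- (cos_period (t + 2 * - INR (Z.to_nat (- k)) * PI) (Z.to_nat (-k))). f_equal. ring.
Qed.

Lemma sin_periodZ t k : sin (t + 2 * IZR k * PI) = sin t.
Proof.
  destruct (Z.le_gt_cases 0 k) as [Hk|Hk].
  - rewrite <- (Z2Nat.id k Hk), <- INR_IZR_INZ. apply sin_period.
  - replace k with (- Z.of_nat (Z.to_nat (- k)))%Z by lia.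
    rewrite opp_IZR, <- INR_IZR_INZ.
    rewrite <- (sin_period (t + 2 * - INR (Z.to_nat (- k)) * PI) (Z.to_nat (-k))). f_equal. ring.
Qed.

Lemma cexp_period x xi : cexp2pi ((x + 1) * IZR xi) = cexp2pi (x * IZR xi).
Proof.
  unfold cexp2pi. replace (2 * PI * ((x + 1) * IZR xi)) with (2 * PI * (x * IZR xi) + 2 * IZR xi * PI) by ring.
  rewrite cos_periodZ, sin_periodZ. reflexivity.
Qed.

Lemma rpow_nonneg x p : 0 <= rpow x p.
Proof. unfold rpow. destruct (Rle_dec x 0). lra. left; apply Rpower_pos'. Qed.

Lemma rpow_le x y p : x <= y -> 0 < y -> 0 <= p -> rpow x p <= Rpower y p.
Proof.
  intros. unfold rpow. destruct (Rle_dec x 0). left; apply Rpower_pos'.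
  apply Rle_Rpower_l; lra.
Qed.

Lemma zero_holder s : in_holder s (fun _ => (0, 0) : C) /\ holder_norm s (fun _ => (0,0) : C) <= 0.
Proof.
  assert (Z0 : Cmod (0, 0) = 0) by apply Cmod_0.
  destruct (holder_bounds s 0 0 (fun _ => (0, 0) : C)) as [A [B C']].
  - intros x h _. rewrite Rmult_0_l. unfold Cminus, Cplus, Copp. simpl.
    replace (0 + - 0, 0 + - 0) with (0, 0) by (f_equal; ring). rewrite Z0. lra.
  - intros x. rewrite Z0. lra.
  - split. split; [intros x; reflexivity|split; auto]. lra.
Qed.

Lemma sum_n_fst (g : nat -> C) N :
  fst (sum_n (G := C_AbelianMonoid) g N) = sum_f_R0 (fun n => fst (g n)) N /\
  snd (sum_n (G := C_AbelianMonoid) g N) = sum_f_R0 (fun n => snd (g n)) N.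
Proof.
  induction N.
  - rewrite sum_O. simpl. auto.
  - rewrite sum_Sn. cbn [sum_f_R0]. destruct IHN as [H1 H2]. rewrite <- H1, <- H2. split; reflexivity.
Qed.

Lemma Cmult_minus_l (c y1 y2 : C) : Cminus (Cmult c y1) (Cmult c y2) = Cmult c (Cminus y1 y2).
Proof. destruct c, y1, y2. unfold Cminus, Cmult, Cplus, Copp. simpl. f_equal; ring. Qed.

Theorem corollary3p7 (r s w rho delta m : R) (a : R -> Z -> C) :
  0 < r <= 1 -> 0 < s < 1 -> 0 < w < 1 ->
  0 <= rho <= 1 -> 0 <= delta <= 1 ->
  symbol_class m rho delta a ->
  m < - (1 / r) - w - 2 * delta ->
  r_nuclear r s w (Top a).
Proof.
  intros Hr Hs Hw Hrho Hd Hsym Hm.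
  destruct (y_bounds m rho delta w a Hsym Hd Hw) as [K [HK Hy]].
  destruct Hsym as [Hper _].
  set (p := - (r * (m + w))).
  assert (Hmw1 : m + w < - / r) by (unfold Rdiv in Hm; lra).
  assert (Hri : 0 < / r) by (apply Rinv_0_lt_compat; lra).
  assert (Hp : 1 < p).
  { unfold p. apply Rmult_lt_compat_l with (r := r) in Hmw1; [|lra].
    replace (r * - / r) with (-1) in Hmw1 by (field; lra). lra. }
  assert (Hmw : m + w < 0) by lra.
  assert (Hbeta : forall xi, Rpower (japan xi) (m + w) <= Rpower (japan xi) (- p)).
  { intros xi. apply Rle_Rpower. apply japan_ge1. unfold p. nra. }
  assert (Yh : forall xi, in_holder w (yf a xi) /\ holder_norm w (yf a xi) <= 2 * (K * Rpower (japan xi) (m + w))).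
  { intros xi. destruct (Hy xi) as [Hy1 Hy2].
    destruct (holder_bounds w (K * Rpower (japan xi) (m + w)) (K * Rpower (japan xi) (m + w)) (yf a xi)) as [A1 [A2 A3]]; auto.
    split; [|lra]. split; [|auto].
    intros x. unfold yf. rewrite cexp_period, Hper. reflexivity. }
  assert (Dh : forall xi, in_dual s (fun u => fourier u xi) /\ 0 <= real (dual_norm s (fun u => fourier u xi)) <= 2).
  { intros xi.
    destruct (zero_holder s) as [Z1 Z2].
    destruct (lub_fin (fun t => exists u, in_holder s u /\ holder_norm s u <= 1 /\ t = Cmod (fourier u xi))
                 (Cmod (fourier (fun _ => (0,0) : C) xi)) 2) as [L1 L2].
    - exists (fun _ => (0,0) : C). split; [exact Z1|split; [lra|reflexivity]].
    - intros t [u [Hu [Hn ->]]]. eapply Rle_trans. apply (fourier_bound s); auto; lra.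
      pose proof (holder_sup_le_norm s u Hu). lra.
    - pose proof (Cmod_ge_0 (fourier (fun _ => (0,0) : C) xi)).
      split; [|unfold dual_norm; lra].
      split; [|split].
      + intros u v Hu Hv. apply (fourier_plus s); auto; lra.
      + intros c u Hu. apply (fourier_scal s); auto; lra.
      + exact L1. }
  assert (Main : forall u, in_holder s u -> in_holder w (Top a u) /\
     is_lim_seq (fun N => holder_norm w (fun x =>
          Cminus (Top a u x) (sum_n (G := C_AbelianMonoid)
             (fun n => Cmult ((fun u0 => fourier u0 (zen n)) u) (yf a (zen n) x)) N))) 0).
  { intros u Hu.
    set (U := 2 * real (sup_norm u)).
    assert (HU : 0 <= U) by (unfold U; pose proof (holder_sup_le_norm s u Hu); lra).
    assert (Hc : forall xi, Cmod (fourier u xi) <= U) by (intros; apply (fourier_bound s); auto; lra).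
    set (f1 := fun x n => fst (Cmult (fourier u (zen n)) (yf a (zen n) x))).
    set (f2 := fun x n => snd (Cmult (fourier u (zen n)) (yf a (zen n) x))).
    set (b := fun n => U * K * Rpower (japan (zen n)) (- p)).
    assert (Hb : ex_series b).
    { apply (ex_series_ext (fun n => scal (U * K) (Rpower (japan (zen n)) (- p)))).
      intros n; reflexivity.
      apply (@ex_series_scal_l R_AbsRing R_NormedModule). apply japan_series; auto. apply japan_zen. }
    assert (Gb : forall x xi, Cmod (Cmult (fourier u xi) (yf a xi x)) <= U * K * Rpower (japan xi) (- p)).
    { intros x xi. rewrite Cmod_mult. destruct (Hy xi) as [Hy1 _]. pose proof (Hy1 x).
      pose proof (Hbeta xi). pose proof (Cmod_ge_0 (fourier u xi)). pose proof (Cmod_ge_0 (yf a xi x)).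
      pose proof (Hc xi).
      apply Rle_trans with (U * (K * Rpower (japan xi) (m + w))).
      apply Rmult_le_compat; auto.
      rewrite Rmult_assoc. apply Rmult_le_compat_l; auto. apply Rmult_le_compat_l; lra. }
    assert (Gd : forall x h xi, h <> 0 -> Cmod (Cminus (Cmult (fourier u xi) (yf a xi (x + h))) (Cmult (fourier u xi) (yf a xi x)))
                    <= U * K * Rpower (japan xi) (- p) * Rpower (Rabs h) w).
    { intros x h xi Hh. rewrite Cmult_minus_l, Cmod_mult. destruct (Hy xi) as [_ Hy2]. pose proof (Hy2 x h Hh).
      pose proof (Hbeta xi). pose proof (Cmod_ge_0 (fourier u xi)).
      pose proof (Cmod_ge_0 (Cminus (yf a xi (x + h)) (yf a xi x))).
      pose proof (Hc xi). pose proof (Rpower_pos' (Rabs h) w).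
      apply Rle_trans with (U * (K * Rpower (japan xi) (m + w) * Rpower (Rabs h) w)).
      apply Rmult_le_compat; auto.
      rewrite !Rmult_assoc. apply Rmult_le_compat_l; auto. apply Rmult_le_compat_l; [lra|].
      apply Rmult_le_compat_r; lra. }
    assert (B1 : forall x n, Rabs (f1 x n) <= b n) by (intros; eapply Rle_trans; [apply re_le_Cmod|apply Gb]).
    assert (B2 : forall x n, Rabs (f2 x n) <= b n) by (intros; eapply Rle_trans; [apply im_le_Cmod|apply Gb]).
    assert (B1' : forall x h n, h <> 0 -> Rabs (f1 (x + h) n - f1 x n) <= b n * Rpower (Rabs h) w).
    { intros x h n Hh. unfold f1. rewrite <- fst_Cminus. eapply Rle_trans; [apply re_le_Cmod|apply Gd; auto]. }
    assert (B2' : forall x h n, h <> 0 -> Rabs (f2 (x + h) n - f2 x n) <= b n * Rpower (Rabs h) w).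
    { intros x h n Hh. unfold f2. rewrite <- snd_Cminus. eapply Rle_trans; [apply im_le_Cmod|apply Gd; auto]. }
    assert (E1 : forall x, ex_series (f1 x)).
    { intros x. apply (@ex_series_le R_AbsRing R_CompleteNormedModule _ b); auto. }
    assert (E2 : forall x, ex_series (f2 x)).
    { intros x. apply (@ex_series_le R_AbsRing R_CompleteNormedModule _ b); auto. }
    assert (TopEq : forall x, Top a u x = (Series (fun k => f1 x (0 + k)%nat), Series (fun k => f2 x (0 + k)%nat))).
    { intros x. unfold Top.
      replace (fun xi => Cmult (Cmult (cexp2pi (x * IZR xi)) (a x xi)) (fourier u xi))
        with (fun xi => Cmult (fourier u xi) (yf a xi x))
        by (apply functional_extensionality; intro; apply Cmult_comm).
      unfold zsum, Re, Im. f_equal.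
      - refine (proj2 (interleave (fun xi => fst (Cmult (fourier u xi) (yf a xi x))) (U * K) p Hp _)).
        intros xi. eapply Rle_trans; [apply re_le_Cmod|apply Gb].
      - refine (proj2 (interleave (fun xi => snd (Cmult (fourier u xi) (yf a xi x))) (U * K) p Hp _)).
        intros xi. eapply Rle_trans; [apply im_le_Cmod|apply Gb]. }
    split.
    - destruct (series_tail_bounds f1 f2 b w 0 Hb B1 B2 B1' B2') as [T1 T2].
      destruct (holder_bounds w (2 * Series (fun k => b (0 + k)%nat)) (2 * Series (fun k => b (0 + k)%nat)) (Top a u))
        as [A1 [A2 A3]].
      + intros x h Hh. rewrite !TopEq. apply T2; auto.
      + intros x. rewrite TopEq. apply T1.
      + split; auto. intros x. unfold Top. f_equal. apply functional_extensionality. intros xi.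
        rewrite cexp_period, Hper. reflexivity.
    - set (T := fun N => Series (fun k => b (S N + k)%nat)).
      assert (DEq : forall N x, Cminus (Top a u x) (sum_n (G := C_AbelianMonoid)
             (fun n => Cmult ((fun u0 => fourier u0 (zen n)) u) (yf a (zen n) x)) N)
             = (Series (fun k => f1 x (S N + k)%nat), Series (fun k => f2 x (S N + k)%nat))).
      { intros N x. rewrite TopEq.
        destruct (sum_n_fst (fun n => Cmult (fourier u (zen n)) (yf a (zen n) x)) N) as [S1 S2].
        apply injective_projections; [rewrite fst_Cminus, S1 | rewrite snd_Cminus, S2]; cbn [fst snd].
        - change (Series (fun k => f1 x (0 + k)%nat)) with (Series (f1 x)).
          rewrite (Series_incr_n (f1 x) (S N)) by (auto; lia). cbn [Init.Nat.pred]. unfold f1. ring.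
        - change (Series (fun k => f2 x (0 + k)%nat)) with (Series (f2 x)).
          rewrite (Series_incr_n (f2 x) (S N)) by (auto; lia). cbn [Init.Nat.pred]. unfold f2. ring. }
      assert (HT : forall N, 0 <= holder_norm w (fun x =>
          Cminus (Top a u x) (sum_n (G := C_AbelianMonoid)
             (fun n => Cmult ((fun u0 => fourier u0 (zen n)) u) (yf a (zen n) x)) N)) <= 4 * T N).
      { intros N.
        destruct (series_tail_bounds f1 f2 b w (S N) Hb B1 B2 B1' B2') as [T1 T2].
        destruct (holder_bounds w (2 * T N) (2 * T N) (fun x =>
          Cminus (Top a u x) (sum_n (G := C_AbelianMonoid)
             (fun n => Cmult ((fun u0 => fourier u0 (zen n)) u) (yf a (zen n) x)) N))) as [_ [_ A3]].
        + intros x h Hh. rewrite !DEq. apply T2; auto.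
        + intros x. rewrite DEq. apply T1.
        + lra. }
      assert (LT : is_lim_seq (fun N => 4 * T N) 0).
      { assert (TE : forall N, T N = Series b - sum_f_R0 b N).
        { intros N. unfold T. rewrite (Series_incr_n b (S N)) by (auto; lia). simpl. ring. }
        apply (is_lim_seq_ext (fun N => 4 * (Series b - sum_f_R0 b N))).
        { intros N. rewrite TE. reflexivity. }
        replace (Finite 0) with (Rbar_mult 4 (Series b - Series b)) by (simpl; f_equal; ring).
        apply is_lim_seq_scal_l. apply is_lim_seq_minus'. apply is_lim_seq_const. apply Series_is_lim; auto. }
      apply (is_lim_seq_le_le (fun _ => 0) _ (fun N => 4 * T N)); auto.
      apply is_lim_seq_const. }
  split.
  - intros u Hu. apply Main; auto.
  - exists (fun n => fun u => fourier u (zen n)), (fun n => yf a (zen n)).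
    split; [intros n; apply Dh|].
    split; [intros n; apply Yh|].
    split.
    + apply (@ex_series_le R_AbsRing R_CompleteNormedModule _
          (fun n => Rpower 2 r * (Rpower (2 * K) r * Rpower (japan (zen n)) (- p)))).
      * intros n. change (norm ?x) with (Rabs x).
        rewrite Rabs_right by (apply Rle_ge, Rmult_le_pos; apply rpow_nonneg).
        destruct (Dh (zen n)) as [_ D2]. destruct (Yh (zen n)) as [_ Y2].
        pose proof (rpow_le (real (dual_norm s (fun u => fourier u (zen n)))) 2 r ltac:(lra) ltac:(lra) ltac:(lra)).
        pose proof (Rpower_pos' (japan (zen n)) (m + w)).
        pose proof (rpow_le (holder_norm w (yf a (zen n))) (2 * (K * Rpower (japan (zen n)) (m + w))) r Y2
                      ltac:(apply Rmult_lt_0_compat; [lra|apply Rmult_lt_0_compat; auto]) ltac:(lra)).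
        apply Rmult_le_compat; try apply rpow_nonneg; auto.
        eapply Rle_trans; [exact H1|].
        rewrite <- Rmult_assoc. rewrite <- Rpower_mult_distr by (try apply Rpower_pos'; lra).
        apply Rmult_le_compat_l. left; apply Rpower_pos'.
        rewrite Rpower_mult. unfold p. right. f_equal. ring.
      * apply (@ex_series_scal_l R_AbsRing R_NormedModule).
        apply (@ex_series_scal_l R_AbsRing R_NormedModule). apply japan_series; auto. apply japan_zen.
    + intros u Hu. apply Main; auto.
Qed.
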